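(* Let $N\ge 4$, let $l,r$ be positive integers with $2\le l+r\le N-2$, let $\hat O\in V_{\mathcal N}$ be $(l,r)$-invertible, let $\hat X_i\in V_{\{i\}}$ ($i=1,\dots,N$), and let $\hat Y_k$ ($k=N-r,\dots,l$) be defined by $\hat Y_{N-r}=\hat X_{N-r+1}\cdots\hat X_N$ and $\hat Y_{k-1}=\bar E_{\{k-l,\dots,k-1\}}^{\{k,\dots,k+r-1\}}\bigl(E_{\{k-l,\dots,k-1\}}^{\{k,\dots,k+r\}}(\hat X_k\hat Y_k)\bigr)$ for $k=N-r,\dots,l+1$ (bar = Moore–Penrose pseudoinverse). Then for every $k=l+1,\dots,N-r$, $$E_{\{1,\dots,k-1\}}^{\{k,\dots,k+r-1\}}(\hat Y_{k-1})=E_{\{1,\dots,k-1\}}^{\{k,\dots,k+r\}}(\hat X_k\hat Y_k).$$ Moreover, for such $k$ the linear map $\phi$ from $\mathrm{ran}\bigl[E_{\{1,\dots,k-1\}}^{\{k,\dots,k+r\}}\bigr]$ to $V_{\{k-l,\dots,k-1\}}$ given by the partial trace $\mathrm{tr}_{\{1,\dots,k-l-1\}}$ is injective.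
   Context: Sites $\mathcal N=\{1,\dots,N\}$, each with Hilbert space $\mathbb C^d$. For each site $i$, $\{\hat P_i^{(\alpha)}\}_{\alpha=1,\dots,d^2}$ is a Hilbert–Schmidt-orthonormal operator basis on site $i$. For $\mathcal I\subset\mathcal N$, $V_{\mathcal I}$ is the complex span of the products $\prod_{i\in\mathcal I}\hat P_i^{(\alpha_i)}$, with Hilbert–Schmidt inner product; operators in $V_{\mathcal I}$ are identified with their tensor product with the identity on the other sites. $\mathrm{tr}_{\mathcal S}$ is the partial trace over sites in $\mathcal S$. For fixed $\hat O\in V_{\mathcal N}$ and disjoint $\mathcal I,\mathcal J\subset\mathcal N$ with $\mathcal I\cup\mathcal J$ contiguous, $E_{\mathcal I}^{\mathcal J}:V_{\mathcal J}\to V_{\mathcal I}$, $E_{\mathcal I}^{\mathcal J}(\hat X)=\mathrm{tr}_{\mathcal N\setminus\mathcal I}[\hat X\hat O]$. Definition ($(l,r)$-invertibility): $\hat O$ is $(l,r)$-invertible if for all integers $k$ with $l\le k\le N-r-1$, $\mathrm{rank}\bigl[E_{\{k-l+1,\dots,k\}}^{\{k+1,\dots,k+r\}}\bigr]=\mathrm{rank}\bigl[E_{\{1,\dots,k\}}^{\{k+1,\dots,N\}}\bigr]$. *)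

(* Defs.v *)
From HB Require Import structures.
From mathcomp Require Import all_boot all_order all_algebra.
Set Implicit Arguments. Unset Strict Implicit. Unset Printing Implicit Defensive.
Import Order.TTheory GRing.Theory Num.Theory.
Local Open Scope ring_scope.

(* Sites are 'I_N (site i of the paper, 1-based, is the ordinal i-1).
   A configuration (basis state of (C^d)^{tensor N}) is x : 'I_N -> 'I_d.
   An operator on the whole chain is its matrix, a function of (x, y). *)
Section Chain.
Variables (C : numClosedFieldType) (N d : nat).

Definition Config := {ffun 'I_N -> 'I_d}.
Definition Op := {ffun Config * Config -> C^o}.

Definition sites (a b : nat) : {set 'I_N} := [set i : 'I_N | (a <= i.+1 <= b)%N].

Definition opmul (A B : Op) : Op :=
  [ffun xy : Config * Config => \sum_(z : Config) A (xy.1, z) * B (z, xy.2)].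
Definition opid : Op := [ffun xy : Config * Config => ((xy.1 == xy.2)%:R : C)].

Definition hs (A B : Op) : C := \sum_(xy : Config * Config) (A xy : C)^* * (B xy : C).

(* partial trace over the sites S; the result (an operator on the complement
   of S) is identified with its tensor product with the identity on S *)
Definition ptr (S : {set 'I_N}) (A : Op) : Op :=
  [ffun xy : Config * Config => (([forall i in S, xy.1 i == xy.2 i])%:R : C) *
     \sum_(z : Config | [forall i in ~: S, z i == xy.1 i])
        A (z, [ffun i => if i \in S then z i else xy.2 i])].

Definition site_basis := 'I_N -> 'I_(d ^ 2) -> 'M[C]_d.

Definition hs_orthonormal (P : site_basis) : Prop :=
  forall (i : 'I_N) (a b : 'I_(d ^ 2)),
    \sum_(u < d) \sum_(v < d) ((P i a u v)^* * P i b u v) = ((a == b)%:R : C).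

Definition prodP (P : site_basis) (I : {set 'I_N}) (al : {ffun 'I_N -> 'I_(d ^ 2)}) : Op :=
  [ffun xy : Config * Config => \prod_(i < N)
      (if i \in I then P i (al i) (xy.1 i) (xy.2 i) else ((xy.1 i == xy.2 i)%:R : C))].

Definition VI (P : site_basis) (I : {set 'I_N}) : {vspace Op} :=
  <<[seq prodP P I al | al <- enum {ffun 'I_N -> 'I_(d ^ 2)}]>>%VS.

(* E_I^J (X) = tr_{N \ I} [X O]   (the domain V_J enters through VI P J) *)
Definition Efun (O : Op) (I : {set 'I_N}) (X : Op) : Op := ptr (~: I) (opmul X O).

Lemma Efun_linear O I : linear (Efun O I).
Proof.
move=> a X Y; apply/ffunP=> xy.
rewrite /Efun /ptr /opmul !ffunE.
under eq_bigr => z _ do rewrite ffunE.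
under [in X in _ = _ + X]eq_bigr => z _ do rewrite ffunE.
under [in X in _ = X + _]eq_bigr => z _ do rewrite ffunE.
rewrite /GRing.scale /= mulrCA -mulrDr; congr (_ * _).
rewrite mulr_sumr -big_split /=; apply: eq_bigr => z _.
rewrite mulr_sumr -big_split /=; apply: eq_bigr => w _.
by rewrite !ffunE mulrDl mulrA.
Qed.

HB.instance Definition _ O I := GRing.isLinear.Build C Op Op _ (Efun O I) (Efun_linear O I).

Definition Emap (O : Op) (I : {set 'I_N}) : 'End(Op) := linfun (Efun O I).

Definition ranE (P : site_basis) (O : Op) (I J : {set 'I_N}) : {vspace Op} :=
  (Emap O I @: VI P J)%VS.
Definition rankE (P : site_basis) (O : Op) (I J : {set 'I_N}) : nat :=
  \dim (ranE P O I J).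

Definition lr_invertible (P : site_basis) (O : Op) (l r : nat) : Prop :=
  forall k : nat, (l <= k <= N - r - 1)%N ->
    rankE P O (sites (k - l + 1) k) (sites (k + 1) (k + r))
    = rankE P O (sites 1 k) (sites (k + 1) N).

(* Moore-Penrose pseudoinverse of E_I^J : V_J -> V_I (Hilbert-Schmidt inner
   products): W = \bar E_I^J (Z)  iff  W lies in V_J and is orthogonal to
   ker E_I^J, and E_I^J W is the orthogonal projection of Z onto ran E_I^J. *)
Definition is_pinv_image (P : site_basis) (O : Op) (I J : {set 'I_N}) (Z W : Op) : Prop :=
  [/\ W \in VI P J,
      (forall K, K \in VI P J -> Efun O I K = 0 -> hs K W = 0) &
      (forall K, K \in VI P J -> hs (Efun O I K) (Z - Efun O I W) = 0)].

End Chain.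

(* Main.v *)
Require Import Defs.
From HB Require Import structures.
From mathcomp Require Import all_boot all_order all_algebra.
From mathcomp Require Import zify.
Set Implicit Arguments. Unset Strict Implicit. Unset Printing Implicit Defensive.
Import Order.TTheory GRing.Theory Num.Theory.
Local Open Scope ring_scope.
Section Aux.
Variables (C : numClosedFieldType) (N d : nat).
Definition sc (P : site_basis C N d) i a := coord [tuple P i a | a < d ^ 2] a (1%:M : 'M[C]_d).

Lemma site_id (P : site_basis C N d) : hs_orthonormal P -> forall i,
  (1%:M : 'M[C]_d) = \sum_a sc P i a *: P i a.
Proof.
move=> hP i.
pose X := [tuple P i a | a < d ^ 2].
have nthX (a : 'I_(d ^ 2)) : X`_a = P i a.
  by rewrite -tnth_nth tnth_mktuple.
have fX : free X.
  apply/freeP=> k hk b.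
  have : \sum_(u < d) \sum_(v < d) ((P i b u v)^* * (\sum_a k a *: X`_a) u v) = 0.
    by rewrite hk; apply: big1 => u _; apply: big1 => v _; rewrite mxE mulr0.
  rewrite (eq_bigr (fun u => \sum_a k a * \sum_(v < d) ((P i b u v)^* * P i a u v))); last first.
    move=> u _; symmetry; under eq_bigr => a _ do rewrite mulr_sumr.
    rewrite exchange_big /=; apply: eq_bigr => v _.
    rewrite summxE mulr_sumr; apply: eq_bigr => a _.
    by rewrite mxE nthX mulrCA.
  rewrite exchange_big /=.
  rewrite (eq_bigr (fun a => k a * ((b == a)%:R))); last first.
    by move=> a _; rewrite -mulr_sumr hP.
  rewrite (bigD1 b) //= eqxx mulr1 big1 ?addr0 // => a hab.
  by rewrite eq_sym (negbTE hab) mulr0.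
have eX : (<<X>> = fullv)%VS.
  apply/eqP; rewrite eqEdim subvf /= dimvf (eqnP fX) size_tuple.
  by rewrite /dim /= expnS expn1 ?muln1.
have : (1%:M : 'M[C]_d) \in <<X>>%VS by rewrite eX memvf.
move/coord_span => {1}->.
by apply: eq_bigr => a _; rewrite nthX.
Qed.

Lemma prodP_in (P : site_basis C N d) I al : prodP P I al \in VI P I.
Proof. by apply: memv_span; apply: map_f; rewrite mem_enum. Qed.

Lemma prodP_ext (P : site_basis C N d) (J J' : {set 'I_N}) al :
  hs_orthonormal P -> J \subset J' -> prodP P J al \in VI P J'.
Proof.
move=> hP sJ.
pose cf i a := if i \in J then ((a == al i)%:R : C) else if i \in J' then sc P i a
               else (a == al i)%:R.
pose coef (f : {ffun 'I_N -> 'I_(d ^ 2)}) := \prod_i cf i (f i).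
suff -> : prodP P J al = \sum_f coef f *: prodP P J' f.
  by apply: memv_suml => f _; apply: memvZ; apply: prodP_in.
apply/ffunP=> xy; rewrite sum_ffunE ffunE.
pose F i a := cf i a * (if i \in J' then P i a (xy.1 i) (xy.2 i)
                         else ((xy.1 i == xy.2 i)%:R : C)).
rewrite (eq_bigr (fun i => \sum_a F i a)); last first.
  move=> i _; rewrite /F /cf; case: (boolP (i \in J)) => hJ.
    rewrite (subsetP sJ _ hJ) (bigD1 (al i)) //= eqxx mul1r big1 ?addr0 //.
    by move=> a /negbTE ->; rewrite mul0r.
  case: (boolP (i \in J')) => hJ'.
    have := site_id hP i => /(congr1 (fun M : 'M[C]_d => M (xy.1 i) (xy.2 i))).
    rewrite summxE mxE => ->; apply: eq_bigr => a _; rewrite mxE //.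
  rewrite (bigD1 (al i)) //= eqxx mul1r big1 ?addr0 //.
  by move=> a /negbTE ->; rewrite mul0r.
rewrite bigA_distr_bigA; apply: eq_bigr => f _.
rewrite !ffunE /F big_split /=; congr (_ * _).
Qed.
Local Notation Op := (Op C N d).
Local Notation Config := (Config N d).

Lemma hs_self0 (A : Op) : hs A A = 0 -> A = 0.
Proof.
rewrite /hs => /eqP; rewrite psumr_eq0 => [/allP H|xy _]; last first.
  by rewrite mulrC -normCK exprn_ge0.
apply/ffunP=> xy; have := H xy (mem_index_enum _); rewrite implyTb mulrC -normCK.
by rewrite expf_eq0 /= normr_eq0 ffunE => /eqP.
Qed.

Lemma ptr_ptr (S1 S2 : {set 'I_N}) (A : Op) : [disjoint S1 & S2] ->
  ptr S1 (ptr S2 A) = ptr (S1 :|: S2) A.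
Proof.
move=> dis.
have nS2 i : i \in S1 -> i \notin S2.
  by move=> h; apply/negP=> h2; move/disjoint_setI0: dis => /setP/(_ i); rewrite !inE h h2.
apply/ffunP=> [[x y]]; rewrite !ffunE /=.
set b1 := [forall i in S1, _]; set b2 := [forall i in S2, x i == y i].
have eb : [forall i in S1 :|: S2, x i == y i] = b1 && b2.
  apply/forallP/andP=> [h|[/forallP h1 /forallP h2] i].
    split; apply/forallP=> i; apply/implyP=> hi; have := h i; rewrite !inE hi ?orbT //=.
  rewrite inE; apply/implyP=> /orP[hi|hi]; [exact: (implyP (h1 i)) | exact: (implyP (h2 i))].
rewrite eb.
under eq_bigr => u hu.
  rewrite ffunE /=.
  have -> : [forall i in S2, u i == [ffun i => if i \in S1 then u i else y i] i] = b2.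
    apply: eq_forallb => i; rewrite ffunE; case: (boolP (i \in S2)) => //= hi.
    have hi1 : i \notin S1 by apply/negP=> h; move: (nS2 _ h); rewrite hi.
    rewrite (negbTE hi1); move/forallP: hu => /(_ i); rewrite inE hi1 /= => /eqP -> //.
  over.
rewrite /= -mulr_sumr mulrA -natrM mulnb; congr (_ * _).
symmetry; rewrite (partition_big (fun z : Config => [ffun i => if i \in S1 then z i else x i])
   (fun u : Config => [forall i in ~: S1, u i == x i])) /=; last first.
  move=> z _; apply/forallP=> i; apply/implyP; rewrite inE ffunE => /negbTE -> //.
apply: eq_bigr => u hu; apply: eq_big => [z|z].
  apply/andP/forallP=> [[/forallP hz /eqP <-] i|hz].
    apply/implyP; rewrite inE ffunE; case: ifP=> //= hi1 hi2.
    by have := hz i; rewrite !inE hi1 (negbTE hi2) /= => /eqP ->.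
  split.
    apply/forallP=> i; apply/implyP; rewrite !inE negb_or => /andP[h1 h2].
    have := hz i; rewrite inE h2 => /eqP ->.
    by move/forallP: hu => /(_ i); rewrite inE h1.
  apply/eqP/ffunP=> i; rewrite ffunE; case: ifP => hi1.
    have := hz i; rewrite inE (nS2 _ hi1) => /eqP -> //.
  by move/forallP: hu => /(_ i); rewrite inE hi1 => /eqP ->.
move=> /andP[_ /eqP hu']; congr (A (z, _)); apply/ffunP=> i; rewrite !ffunE inE.
case: (boolP (i \in S1)) => hi1 /=.
  rewrite (negbTE (nS2 _ hi1)); by rewrite -hu' ffunE hi1.
by case: (i \in S2).
Qed.

Lemma VI_sub (P : site_basis C N d) (J J' : {set 'I_N}) :
  hs_orthonormal P -> J \subset J' -> (VI P J <= VI P J')%VS.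
Proof.
move=> hP sJ; apply/span_subvP => x /mapP[al _ ->]; exact: prodP_ext.
Qed.

Definition opmulL (Y X : Op) := opmul X Y.
Definition opmulR (X Y : Op) := opmul X Y.

Lemma opmulL_lin Y : linear (opmulL Y).
Proof.
move=> a X Z; apply/ffunP=> xy; rewrite /opmulL /opmul !ffunE.
rewrite /GRing.scale /= mulr_sumr -big_split /=; apply: eq_bigr => z _.
by rewrite !ffunE mulrDl mulrA.
Qed.
HB.instance Definition _ Y := GRing.isLinear.Build C Op Op _ (opmulL Y) (opmulL_lin Y).

Lemma opmulR_lin X : linear (opmulR X).
Proof.
move=> a Y Z; apply/ffunP=> xy; rewrite /opmulR /opmul !ffunE.
rewrite /GRing.scale /= mulr_sumr -big_split /=; apply: eq_bigr => z _.
by rewrite !ffunE mulrDr mulrCA.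
Qed.
HB.instance Definition _ X := GRing.isLinear.Build C Op Op _ (opmulR X) (opmulR_lin X).

Lemma span_lin (f : 'End(Op)) (X : seq Op) (U : {vspace Op}) :
  (forall x, x \in X -> f x \in U) -> forall v, v \in <<X>>%VS -> f v \in U.
Proof.
move=> h v hv; have : f v \in (f @: <<X>>)%VS by apply: memv_img.
by rewrite limg_span; apply/subvP/span_subvP => w /mapP[x hx ->]; apply: h.
Qed.

Lemma opmul_prodP (P : site_basis C N d) (S1 S2 : {set 'I_N}) a b :
  [disjoint S1 & S2] ->
  opmul (prodP P S1 a) (prodP P S2 b)
  = prodP P (S1 :|: S2) [ffun j => if j \in S1 then a j else b j].
Proof.
move=> dis.
have nS2 i : i \in S1 -> i \notin S2.
  by move=> h; apply/negP=> h2; move/disjoint_setI0: dis => /setP/(_ i); rewrite !inE h h2.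
apply/ffunP=> [[x y]]; rewrite !ffunE /=.
have bs (F G : 'I_N -> C) : ((\prod_i F i : C^o) * (\prod_i G i : C^o) : C^o) = \prod_i (F i * G i).
  by symmetry; exact: big_split.
pose H j t := (if j \in S1 then P j (a j) (x j) t else ((x j == t)%:R : C)) *
   (if j \in S2 then P j (b j) t (y j) else ((t == y j)%:R : C)).
rewrite (eq_bigr (fun z : Config => \prod_j H j (z j))); last first.
  move=> z _; rewrite !ffunE /= bs //.
rewrite -(bigA_distr_bigA H) /=.
apply: eq_bigr => j _; rewrite /H ffunE inE.
case: (boolP (j \in S1)) => h1 /=.
  rewrite (negbTE (nS2 _ h1)) (bigD1 (y j)) //= eqxx mulr1 big1 ?addr0 //.
  by move=> t /negbTE ->; rewrite mulr0.
case: (boolP (j \in S2)) => h2 /=.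
  rewrite (bigD1 (x j)) //= eqxx mul1r big1 ?addr0 //.
  by move=> t; rewrite eq_sym => /negbTE ->; rewrite mul0r.
rewrite (bigD1 (x j)) //= eqxx mul1r big1 ?addr0 //.
by move=> t; rewrite eq_sym => /negbTE ->; rewrite mul0r.
Qed.

Lemma opmul_in (P : site_basis C N d) (S1 S2 : {set 'I_N}) (X Y : Op) :
  [disjoint S1 & S2] -> X \in VI P S1 -> Y \in VI P S2 ->
  opmul X Y \in VI P (S1 :|: S2).
Proof.
move=> dis hX hY.
have step1 g : g \in [seq prodP P S1 al | al <- enum {ffun 'I_N -> 'I_(d ^ 2)}] ->
    opmul g Y \in VI P (S1 :|: S2).
  case/mapP=> a _ ->.
  have := @span_lin (linfun (opmulR (prodP P S1 a))) _ (VI P (S1 :|: S2)) _ Y hY.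
  rewrite lfunE; apply=> x /mapP[b _ ->]; rewrite lfunE /= /opmulR opmul_prodP //.
  exact: prodP_in.
have := @span_lin (linfun (opmulL Y)) _ (VI P (S1 :|: S2)) _ X hX.
rewrite lfunE; apply=> x hx; rewrite lfunE; exact: step1.
Qed.

Lemma opid_in (P : site_basis C N d) : (0 < N)%N -> opid C N d \in VI P set0.
Proof.
move=> hN.
case: (pickP (@predT {ffun 'I_N -> 'I_(d ^ 2)})) => [al _|none].
  suff -> : opid C N d = prodP P set0 al by apply: prodP_in.
  apply/ffunP=> [[x y]]; rewrite !ffunE /=.
  case: eqP => [->|neq].
    by rewrite big1 // => i _; rewrite inE eqxx.
  have [i hi] : exists i, x i != y i.
    case: (boolP [exists i, x i != y i]) => [/existsP //|].
    rewrite negb_exists => /forallP h; exfalso; apply: neq; apply/ffunP=> i.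
    by have := h i; rewrite negbK => /eqP.
  by rewrite (bigD1 i) //= inE (negbTE hi) mul0r.
suff -> : opid C N d = 0 by apply: mem0v.
apply/ffunP=> [[x y]]; exfalso.
have hd : (0 < d ^ 2)%N by rewrite expn_gt0 (leq_ltn_trans (leq0n _) (ltn_ord (x (Ordinal hN)))).
by have := none [ffun _ => Ordinal hd].
Qed.

Lemma bigprod_in (P : site_basis C N d) (X : nat -> Op) : (0 < N)%N ->
  hs_orthonormal P -> (forall i : nat, (1 <= i <= N)%N -> X i \in VI P (sites N i i)) ->
  forall n a, (1 <= a)%N -> (a + n <= N + 1)%N ->
  \big[@opmul C N d / opid C N d]_(a <= i < a + n) X i \in VI P (sites N a (a + n - 1)).
Proof.
move=> hN hP hX; elim=> [|n IH] a ha han.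
  rewrite big_geq ?addn0 //.
  by apply: (subvP (VI_sub hP (sub0set _))); apply: opid_in.
rewrite big_ltn; last by lia.
have -> : sites N a (a + n.+1 - 1) = sites N a a :|: sites N a.+1 (a.+1 + n - 1).
  by apply/setP=> i; rewrite !inE; lia.
apply: opmul_in.
- by rewrite -setI_eq0; apply/eqP/setP=> i; rewrite !inE; lia.
- by apply: hX; lia.
- have h1 : (1 <= a.+1)%N by lia.
  have h2 : (a.+1 + n <= N + 1)%N by lia.
  by rewrite -addSnnS; apply: IH.
Qed.

Lemma ptr_lin S : linear (ptr (C:=C) (N:=N) (d:=d) S).
Proof.
move=> a X Y; apply/ffunP=> xy; rewrite /ptr !ffunE.
rewrite /GRing.scale /= mulrCA -mulrDr; congr (_ * _).
rewrite mulr_sumr -big_split /=; apply: eq_bigr => z _.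
by rewrite !ffunE.
Qed.
HB.instance Definition _ S := GRing.isLinear.Build C Op Op _ (ptr (C:=C) (N:=N) (d:=d) S) (ptr_lin S).

End Aux.

Theorem mainTheorem2 (C : numClosedFieldType) (N d l r : nat)
  (P : site_basis C N d) (O : Op C N d) (X Y : nat -> Op C N d) :
  (4 <= N)%N -> (0 < l)%N -> (0 < r)%N -> (2 <= l + r <= N - 2)%N ->
  hs_orthonormal P ->
  O \in VI P [set: 'I_N] ->
  lr_invertible P O l r ->
  (forall i : nat, (1 <= i <= N)%N -> X i \in VI P (sites N i i)) ->
  Y (N - r)%N = \big[@opmul C N d / opid C N d]_(N - r + 1 <= i < N + 1) X i ->
  (forall k : nat, (l + 1 <= k <= N - r)%N ->
     is_pinv_image P O (sites N (k - l) (k - 1)) (sites N k (k + r - 1))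
       (Efun O (sites N (k - l) (k - 1)) (opmul (X k) (Y k)))
       (Y (k - 1)%N)) ->
  forall k : nat, (l + 1 <= k <= N - r)%N ->
    Efun O (sites N 1 (k - 1)) (Y (k - 1)%N)
      = Efun O (sites N 1 (k - 1)) (opmul (X k) (Y k))
    /\ {in ranE P O (sites N 1 (k - 1)) (sites N k (k + r)) &,
          injective (ptr (sites N 1 (k - l - 1)))}.
Proof.
move=> hN hl hr hlr hP _ hinv hX hYN hpinv k hk.
have hN0 : (0 < N)%N by lia.
set Iloc := sites N (k - l) (k - 1).
set Ibig := sites N 1 (k - 1).
set J := sites N k (k + r - 1).
set J' := sites N k (k + r).
set Jf := sites N k N.
set S := sites N 1 (k - l - 1).
have sJ : (VI P J <= VI P J')%VS by apply: VI_sub => //; apply/subsetP=> i; rewrite !inE; lia.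
have sJ' : (VI P J' <= VI P Jf)%VS by apply: VI_sub => //; apply/subsetP=> i; rewrite !inE; lia.
have comp Z : ptr S (Efun O Ibig Z) = Efun O Iloc Z.
  rewrite /Efun ptr_ptr; last first.
    by rewrite -setI_eq0; apply/eqP/setP=> i; rewrite !inE; lia.
  congr ptr; apply/setP=> i; rewrite !inE; lia.
pose f : 'End(Op C N d) := linfun (ptr S).
have fcomp : (f \o Emap O Ibig)%VF = Emap O Iloc.
  by apply/lfunP=> Z; rewrite comp_lfunE !lfunE /= comp.
have hrank : rankE P O Iloc J = rankE P O Ibig Jf.
  have := hinv (k - 1)%N ltac:(lia).
  have -> : (k - 1 - l + 1 = k - l)%N by lia.
  have -> : (k - 1 + 1 = k)%N by lia.
  by have -> : (k - 1 + r = k + r - 1)%N by lia.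
set U := (Emap O Ibig @: VI P J')%VS.
have d12 : (\dim (Emap O Iloc @: VI P J) <= \dim (Emap O Iloc @: VI P J'))%N.
  by apply: dimvS; apply: limgS.
have e2 : (Emap O Iloc @: VI P J')%VS = (f @: U)%VS by rewrite -fcomp limg_comp.
have kd := limg_ker_dim f U.
have d34 : (\dim U <= \dim (Emap O Ibig @: VI P Jf))%N.
  by apply: dimvS; apply: limgS.
move: hrank; rewrite /rankE /ranE -/Iloc -/J -/Ibig -/Jf => hrank.
have dker : \dim (U :&: lker f) = 0%N.
  rewrite e2 in d12; move: d12 d34 hrank kd.
  set a := \dim (f @: U); set b := \dim U; set c := \dim (Emap O Iloc @: VI P J).
  set e := \dim (Emap O Ibig @: VI P Jf); set g := \dim (U :&: lker f).
  lia.
have ker0 : (U :&: lker f = 0)%VS by apply/eqP; rewrite -dimv_eq0 dker.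
have inj : {in U &, injective (ptr S)}.
  move=> u v hu hv huv; apply/eqP; rewrite -subr_eq0; apply/eqP.
  have : u - v \in (U :&: lker f)%VS.
    rewrite memv_cap memvB //= memv_ker lfunE /= raddfB /= huv subrr eqxx.
    by [].
  by rewrite ker0 memv0 => /eqP.
split; last exact: inj.
have [hW _ hW3] := hpinv k hk.
have hYk : Y k \in VI P (sites N (k + 1) (k + r)).
  case: (ltnP k (N - r)) => hk2.
    have [h1 _ _] := hpinv k.+1 ltac:(lia).
    move: h1; rewrite (_ : k.+1 - 1 = k)%N; last by lia.
    by rewrite (_ : k.+1 + r - 1 = k + r)%N ?addn1 //; lia.
  have ek : k = (N - r)%N by lia.
  rewrite ek hYN.
  have := bigprod_in hN0 hP hX (n := r) (a := (N - r + 1)%N) ltac:(lia) ltac:(lia).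
  rewrite (_ : N - r + 1 + r = N + 1)%N; last by lia.
  by rewrite (_ : N + 1 - 1 = N - r + r)%N; last by lia.
have hZ0 : opmul (X k) (Y k) \in VI P J'.
  have -> : J' = sites N k k :|: sites N (k + 1) (k + r).
    by apply/setP=> i; rewrite !inE; lia.
  apply: opmul_in => //.
  - by rewrite -setI_eq0; apply/eqP/setP=> i; rewrite !inE; lia.
  - by apply: hX; lia.
have eR : (Emap O Iloc @: VI P J)%VS = (Emap O Iloc @: VI P J')%VS.
  apply/eqP; rewrite eqEdim limgS //= e2 (limg_dim_eq ker0) hrank; exact: d34.
have : Efun O Iloc (opmul (X k) (Y k)) \in (Emap O Iloc @: VI P J)%VS.
  by rewrite eR -(lfunE (Efun O Iloc)); apply: memv_img.
case/memv_imgP=> K0 hK0; rewrite lfunE /= => eK0.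
have hd := hW3 (K0 - Y (k - 1)%N) (memvB hK0 hW).
rewrite raddfB /= -eK0 in hd.
have eW : Efun O Iloc (Y (k - 1)%N) = Efun O Iloc (opmul (X k) (Y k)).
  by apply/eqP; rewrite eq_sym -subr_eq0; apply/eqP; apply: hs_self0.
apply: inj.
- by rewrite -(lfunE (Efun O Ibig)); apply: memv_img; apply: (subvP sJ).
- by rewrite -(lfunE (Efun O Ibig)); apply: memv_img.
- by rewrite !comp.
Qed.
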